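(* Let $\psi:[0,\infty)\to[0,\infty)$ be convex, nondecreasing, not identically zero, with $\psi(0)=0$; let $\Psi=e^{\psi}-1$ and, for $L>0$, $\Psi(z;L)=\exp\big(\frac{2}{L^2}\psi(Lz)\big)-1$. Let $Z_1,\dots,Z_m$ be random variables with $\tau\equiv\max_{1\le j\le m}\|Z_j\|_{\Psi}<\infty$. Then $$\Big\|\Big(\max_{1\le j\le m}|Z_j|-\tau\,\Psi^{-1}(m)\Big)_+\Big\|_{\Psi(\cdot;\sqrt6)}\le\sqrt6\,\tau.$$
   Context: For $y>0$, $\Psi^{-1}(y)$ is the unique $x\ge0$ with $\Psi(x)=y$ (so $\Psi^{-1}(m)=\psi^{-1}(\log(1+m))$). The Orlicz norm is $\|X\|_{\Psi}=\inf\{c>0:E\Psi(|X|/c)\le1\}$; $(a)_+=\max(a,0)$. *)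

(* Defs.v *)
From HB Require Import structures.
From mathcomp Require Import all_boot all_order all_algebra.
From mathcomp Require Import all_classical all_reals all_analysis.
Set Implicit Arguments. Unset Strict Implicit. Unset Printing Implicit Defensive.
Import Order.TTheory GRing.Theory Num.Theory.
Local Open Scope ring_scope.
Local Open Scope classical_set_scope.

Definition PsiF (R : realType) (psi : R -> R) (x : R) : R := expR (psi x) - 1.

Definition PsiL (R : realType) (psi : R -> R) (L : R) (z : R) : R :=
  expR (2 / L ^+ 2 * psi (L * z)) - 1.

Definition Psi_inv (R : realType) (psi : R -> R) (y : R) : R :=
  xget 0 [set x : R | 0 <= x /\ PsiF psi x = y].

(* Orlicz norm ||X||_Phi = inf {c > 0 : E Phi(|X|/c) <= 1}, valued in \bar R
   (inf of the empty set is +oo). *)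
Definition orlicz_norm d (T : measurableType d) (R : realType)
  (P : probability T R) (Phi : R -> R) (X : T -> R) : \bar R :=
  ereal_inf [set c%:E | c in [set c : R | 0 < c /\
     (\int[P]_x (Phi (`|X x| / c))%:E <= 1)%E]].

(* Main.v *)
Require Import Defs.
From HB Require Import structures.
From mathcomp Require Import all_boot all_order all_algebra.
From mathcomp Require Import all_classical all_reals all_analysis.
From mathcomp Require Import measurable_realfun.
From mathcomp Require Import ring lra.
Import Order.TTheory GRing.Theory Num.Theory.
Import numFieldNormedType.Exports.
Local Open Scope ring_scope.
Local Open Scope classical_set_scope.

Set Implicit Arguments. Unset Strict Implicit.

Lemma psi_scale (R : realType) (psi : R -> R) (psi0 : psi 0 = 0)
  (psi_cvx : forall x y t : R, 0 <= x -> 0 <= y -> 0 <= t <= 1 ->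
     psi (t * x + (1 - t) * y) <= t * psi x + (1 - t) * psi y)
  (t x : R) : 0 <= t <= 1 -> 0 <= x -> psi (t * x) <= t * psi x.
Proof.
move=> ht hx; have := psi_cvx x 0 t hx (lexx 0) ht.
by rewrite mulr0 addr0 psi0 mulr0 addr0.
Qed.

Lemma psi_super (R : realType) (psi : R -> R) (psi0 : psi 0 = 0)
  (psi_cvx : forall x y t : R, 0 <= x -> 0 <= y -> 0 <= t <= 1 ->
     psi (t * x + (1 - t) * y) <= t * psi x + (1 - t) * psi y)
  (a b : R) : 0 <= a -> 0 <= b -> psi a + psi b <= psi (a + b).
Proof.
move=> ha hb.
have [s0|spos] := eqVneq (a + b) 0.
  have a0 : a = 0 by apply/le_anti/andP; split; lra.
  have b0 : b = 0 by apply/le_anti/andP; split; lra.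
  by rewrite a0 b0 !addr0 psi0 addr0.
have sp : 0 < a + b by lra.
have ta : 0 <= a / (a + b) <= 1.
  by apply/andP; split; [apply: divr_ge0; lra | rewrite ler_pdivrMr //; lra].
have tb : 0 <= b / (a + b) <= 1.
  by apply/andP; split; [apply: divr_ge0; lra | rewrite ler_pdivrMr //; lra].
have hs : 0 <= a + b by lra.
have := psi_scale psi0 psi_cvx ta hs; have := psi_scale psi0 psi_cvx tb hs.
rewrite !divfK ?gt_eqF //.
move=> h1 h2.
have e : a / (a + b) * psi (a + b) + b / (a + b) * psi (a + b) = psi (a + b).
  by field; rewrite gt_eqF.
lra.
Qed.

Lemma psi_chord (R : realType) (psi : R -> R)
  (psi_cvx : forall x y t : R, 0 <= x -> 0 <= y -> 0 <= t <= 1 ->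
     psi (t * x + (1 - t) * y) <= t * psi x + (1 - t) * psi y)
  (s u : R) : 0 <= s <= 1 -> 0 <= u ->
  (2 - s) * psi u <= psi (s * u) + (1 - s) * psi (2 * u).
Proof.
move=> /andP[s0 s1] hu.
have p2 : 0 < 2 - s by lra.
have hl : 0 <= (2 - s)^-1 <= 1.
  apply/andP; split; first by rewrite invr_ge0; lra.
  by rewrite invf_le1 //; lra.
have h2u : 0 <= 2 * u by lra.
have := psi_cvx (s * u) (2 * u) _ (mulr_ge0 s0 hu) h2u hl.
have -> : (2 - s)^-1 * (s * u) + (1 - (2 - s)^-1) * (2 * u) = u.
  by field; lra.
set A := psi (s * u); set B := psi (2 * u); set C := psi u => h.
have := ler_wpM2l (ltW p2) h.
have -> : (2 - s) * ((2 - s)^-1 * A + (1 - (2 - s)^-1) * B) = A + (1 - s) * B.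
  by field; lra.
done.
Qed.

Lemma bern_ineq (R : realType) (n : nat) (x : R) : 0 <= x ->
  1 + n%:R * x <= (1 + x) ^+ n.
Proof.
move=> hx; elim: n => [|n IH]; first by rewrite mul0r addr0 expr0.
rewrite exprS -natr1.
have h1 : 0 <= n%:R * x by apply: mulr_ge0.
have h2 : 0 <= (1 + x) by lra.
have := ler_wpM2l h2 IH.
have : 0 <= (1 + x) * (n%:R * x) by apply: mulr_ge0.
nra.
Qed.

Lemma exp_div_le (R : realType) (b : R) (n : nat) : 0 <= b -> (0 < n)%N ->
  expR (b / n%:R) - 1 <= (expR b - 1) / n%:R.
Proof.
move=> hb hn.
have np : 0 < n%:R :> R by rewrite ltr0n.
set y := expR (b / n%:R).
have eb : expR b = y ^+ n.
  by rewrite /y -expRM_natl mulrC divfK // gt_eqF.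
have y1 : 1 <= y.
  rewrite /y; have := expR_ge1Dx (b / n%:R).
  have : 0 <= b / n%:R by apply: divr_ge0; lra.
  lra.
have := @bern_ineq R n (y - 1) ltac:(lra).
have -> : 1 + (y - 1) = y by ring.
rewrite -eb => h.
rewrite ler_pdivlMr //; lra.
Qed.


Lemma lip_cont (R : realType) (g : R -> R) (K : R) : 0 < K ->
  (forall x y, `|g x - g y| <= K * `|x - y|) -> continuous g.
Proof.
move=> K0 hg x; apply/cvgrPdist_lt => e e0.
near=> y.
apply: (le_lt_trans (hg x y)).
rewrite -ltr_pdivlMl //.
near: y.
apply: cvgr_dist_lt => //.
by rewrite mulr_gt0 // invr_gt0.
Unshelve. all: by end_near.
Qed.

Lemma clamp_lip (R : realType) (B x y : R) : 0 <= B ->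
  `|Order.min (Order.max x 0) B - Order.min (Order.max y 0) B| <= `|x - y|.
Proof.
move=> B0; have h1 := ler_norm (x - y); have h2 := ler_norm (y - x).
rewrite distrC in h2.
rewrite ler_norml !maxElt !minElt.
case: (ltP x 0) => ? /=; case: (ltP y 0) => ? /=;
case: (ltP 0 B) => ? /=; case: (ltP x B) => ? /=; case: (ltP y B) => ? /=;
apply/andP; split; lra.
Qed.

Lemma clamp_in (R : realType) (B x : R) : 0 <= B ->
  0 <= Order.min (Order.max x 0) B <= B.
Proof.
move=> B0; rewrite !maxElt !minElt.
case: (ltP x 0) => ? /=; case: (ltP 0 B) => ? /=; case: (ltP x B) => ? /=;
apply/andP; split; lra.
Qed.

Lemma psi_lip (R : realType) (psi : R -> R) (psi0 : psi 0 = 0)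
  (psi_ge0 : forall x : R, 0 <= x -> 0 <= psi x)
  (psi_nd : forall x y : R, 0 <= x -> x <= y -> psi x <= psi y)
  (psi_cvx : forall x y t : R, 0 <= x -> 0 <= y -> 0 <= t <= 1 ->
     psi (t * x + (1 - t) * y) <= t * psi x + (1 - t) * psi y)
  (B a b : R) : 0 <= a -> a <= b -> b <= B ->
  psi b - psi a <= psi (B + 1) * (b - a).
Proof.
move=> a0 ab bB.
have d0 : 1 <= B + 1 - a by lra.
set l := (B + 1 - b) / (B + 1 - a).
have hl : 0 <= l <= 1.
  apply/andP; split; first by apply: divr_ge0; lra.
  by rewrite ler_pdivrMr; lra.
have B1 : 0 <= B + 1 by lra.
have := psi_cvx a (B + 1) l a0 B1 hl.
have -> : l * a + (1 - l) * (B + 1) = b by rewrite /l; field; lra.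
have -> : 1 - l = (b - a) / (B + 1 - a) by rewrite /l; field; lra.
move=> h.
have pa := psi_ge0 a a0.
have pB := psi_nd a (B + 1) a0 ltac:(lra).
have pB0 := psi_ge0 (B + 1) B1.
have e1 : 0 <= (b - a) / (B + 1 - a) <= 1.
  apply/andP; split; first by apply: divr_ge0; lra.
  by rewrite ler_pdivrMr; lra.
have e2 : (b - a) / (B + 1 - a) <= b - a.
  by rewrite ler_pdivrMr; nra.
have : psi b - psi a <= (b - a) / (B + 1 - a) * (psi (B + 1) - psi a).
  have hl' : l = 1 - (b - a) / (B + 1 - a) by rewrite /l; field; lra.
  rewrite hl' in h; nra.
move=> h3.
have : (b - a) / (B + 1 - a) * (psi (B + 1) - psi a) <= (b - a) * psi (B + 1).
  have e3 : 0 <= (b - a) / (B + 1 - a) by case/andP: e1.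
  nra.
lra.
Qed.

Lemma psi_surj (R : realType) (psi : R -> R) (psi0 : psi 0 = 0)
  (psi_ge0 : forall x : R, 0 <= x -> 0 <= psi x)
  (psi_nd : forall x y : R, 0 <= x -> x <= y -> psi x <= psi y)
  (psi_cvx : forall x y t : R, 0 <= x -> 0 <= y -> 0 <= t <= 1 ->
     psi (t * x + (1 - t) * y) <= t * psi x + (1 - t) * psi y)
  (psi_nz : exists x : R, 0 <= x /\ psi x != 0)
  (l : R) : 0 <= l -> exists2 x, 0 <= x & psi x = l.
Proof.
move=> l0.
case: psi_nz => x1 [x10 px1].
have p1 : 0 < psi x1 by rewrite lt_def px1 psi_ge0.
have nx : forall n : nat, n%:R * psi x1 <= psi (n%:R * x1).
  elim=> [|n IH]; first by rewrite !mul0r psi0.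
  rewrite -natr1 !mulrDl !mul1r.
  have := psi_super psi0 psi_cvx (mulr_ge0 (ler0n _ n) x10) x10.
  lra.
set n := (Num.truncn (l / psi x1)).+1.
have hn : l / psi x1 < n%:R by apply: truncnS_gt.
set B := n%:R * x1.
have B0 : 0 <= B by apply: mulr_ge0.
have lB : l <= psi B.
  apply: le_trans (nx n).
  by rewrite -ler_pdivrMr //; apply: ltW.
set g := fun x => psi (Order.min (Order.max x 0) B).
have K0 : 0 < psi (B + 1) + 1 by have := psi_ge0 (B + 1) ltac:(lra); lra.
have gl : forall x y, `|g x - g y| <= (psi (B + 1) + 1) * `|x - y|.
  move=> x y; rewrite /g.
  have := clamp_lip x y B0.
  have /andP[cx0 cxB] := clamp_in x B0.
  have /andP[cy0 cyB] := clamp_in y B0.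
  set cx := Order.min (Order.max x 0) B.
  set cy := Order.min (Order.max y 0) B.
  move=> hc.
  have hn0 : 0 <= `|x - y| by [].
  have pB0 := psi_ge0 (B + 1) ltac:(lra).
  have [hxy|hxy] := leP cx cy.
    have := psi_lip psi0 psi_ge0 psi_nd psi_cvx cx0 hxy cyB.
    have := psi_nd cx cy cx0 hxy.
    have : cy - cx <= `|x - y| by move: hc; rewrite distrC ger0_norm; lra.
    move=> h1 h2 h3; rewrite distrC ger0_norm; last lra.
    rewrite -/cx -/cy in h3; nra.
  have hxy' : cy <= cx by apply: ltW.
  have := psi_lip psi0 psi_ge0 psi_nd psi_cvx cy0 hxy' cxB.
  have := psi_nd cy cx cy0 hxy'.
  have : cx - cy <= `|x - y| by move: hc; rewrite ger0_norm; lra.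
  move=> h1 h2 h3; rewrite ger0_norm; last lra.
  rewrite -/cx -/cy in h3; nra.
have gc := lip_cont K0 gl.
have g0 : g 0 = 0 by rewrite /g maxxx (min_l B0) psi0.
have gB : g B = psi B.
  by rewrite /g (max_l B0) minxx.
have g0B : 0 <= psi B := psi_ge0 B B0.
have hv : Num.min (g 0) (g B) <= l <= Num.max (g 0) (g B).
  rewrite g0 gB (min_l g0B) (max_r g0B); apply/andP; split => //.
have [c] := @IVT R g 0 B l B0 (continuous_subspaceT gc) hv.
rewrite in_itv /= => /andP[c0 cB] gcl.
exists c => //; rewrite -gcl /g (max_l c0) (min_l cB) //.
Qed.

Lemma psi_inv_spec (R : realType) (psi : R -> R) (psi0 : psi 0 = 0)
  (psi_ge0 : forall x : R, 0 <= x -> 0 <= psi x)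
  (psi_nd : forall x y : R, 0 <= x -> x <= y -> psi x <= psi y)
  (psi_cvx : forall x y t : R, 0 <= x -> 0 <= y -> 0 <= t <= 1 ->
     psi (t * x + (1 - t) * y) <= t * psi x + (1 - t) * psi y)
  (psi_nz : exists x : R, 0 <= x /\ psi x != 0)
  (y : R) : 0 <= y -> 0 <= Psi_inv psi y /\ expR (psi (Psi_inv psi y)) = 1 + y.
Proof.
move=> y0.
have l0 : 0 <= ln (1 + y) by rewrite ln_ge0 //; lra.
have [x x0 px] := psi_surj psi0 psi_ge0 psi_nd psi_cvx psi_nz l0.
have ex : exists x, [set x : R | 0 <= x /\ PsiF psi x = y] x.
  exists x; split => //; rewrite /PsiF px lnK; first by ring.
  by rewrite posrE; lra.
have [h1 h2] := xgetPex 0 ex.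
split => //; move: h2; rewrite /PsiF => h2; rewrite /Psi_inv; lra.
Qed.
Lemma pointwise (R : realType) (psi : R -> R)
  (psi0 : psi 0 = 0)
  (psi_ge0 : forall x : R, 0 <= x -> 0 <= psi x)
  (psi_nd : forall x y : R, 0 <= x -> x <= y -> psi x <= psi y)
  (psi_cvx : forall x y t : R, 0 <= x -> 0 <= y -> 0 <= t <= 1 ->
     psi (t * x + (1 - t) * y) <= t * psi x + (1 - t) * psi y)
  (m : nat) (m_gt0 : (0 < m)%N) (f : 'I_m -> R) (f0 : forall j, 0 <= f j)
  (c v w : R) (k : nat) : 0 < c -> 0 <= v -> w = c * v -> (0 < k)%N ->
  PsiL psi (Num.sqrt 6)
    (`|Order.max (\big[Order.max/0]_(j < m) f j - w) 0| / (Num.sqrt 6 * (k%:R * c)))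
  <= expR (- psi v) / (3 * k%:R) * \sum_(j < m) expR (psi (f j / c)).
Proof.
move=> c0 v0 ew k0.
set M := \big[Order.max/0]_(j < m) f j.
have M0 : 0 <= M by apply: Order.TotalTheory.bigmax_ge_id.
set y := Order.max (M - w) 0.
have y0 : 0 <= y by rewrite /y le_max lexx orbT.
rewrite ger0_norm //.
have kp : 0 < k%:R :> R by rewrite ltr0n.
have L0 : 0 < Num.sqrt 6 :> R by rewrite sqrtr_gt0; lra.
rewrite /PsiL.
have -> : Num.sqrt 6 * (y / (Num.sqrt 6 * (k%:R * c))) = k%:R^-1 * (y / c).
  by field; rewrite ?gt_eqF //; apply/andP; split; rewrite gt_eqF.
rewrite sqr_sqrtr; last lra.
have yc0 : 0 <= y / c by apply: divr_ge0; lra.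
have hk : 0 <= (k%:R : R)^-1 <= 1.
  by apply/andP; split; [rewrite invr_ge0; lra | rewrite invf_le1 // ler1n].
have s1 := psi_scale psi0 psi_cvx hk yc0.
set b := psi (y / c).
have b0 : 0 <= b by apply: psi_ge0.
have s2 : 2 / 6 * psi (k%:R^-1 * (y / c)) <= b / (3 * k)%:R.
  rewrite natrM.
  have -> : b / (3%:R * k%:R) = 3^-1 * (k%:R^-1 * b) by field; rewrite gt_eqF.
  have -> : 2 / 6 = 3^-1 :> R by field.
  by apply: ler_wpM2l => //; rewrite invr_ge0; lra.
have s3 := exp_div_le b0 (_ : (0 < 3 * k)%N).
have s4 : expR (b / (3 * k)%:R) - 1 <= (expR b - 1) / (3 * k)%:R by apply: s3; rewrite muln_gt0.
have s5 : expR b - 1 <= expR (- psi v) * \sum_(j < m) expR (psi (f j / c)).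
  have S0 : 0 <= \sum_(j < m) expR (psi (f j / c)).
    by apply: sumr_ge0 => i _; apply: ltW; apply: expR_gt0.
  have E0 : 0 < expR (- psi v) by apply: expR_gt0.
  have [hle|hlt] := leP (M - w) 0.
    have -> : b = 0 by rewrite /b /y max_r // mul0r psi0.
    rewrite expR0 subrr; apply: mulr_ge0 => //; lra.
  have ey : y = M - w by rewrite /y max_l //; apply: ltW.
  have e2 : y / c + v = M / c by rewrite ey ew; field; rewrite gt_eqF.
  have v0' := psi_super psi0 psi_cvx yc0 v0.
  rewrite e2 in v0'.
  have [j0 _ ej0] := @Order.TotalTheory.eq_bigmax _ _ _ 0 (Ordinal m_gt0) xpredT f is_true_true (fun i _ => f0 i).
  rewrite -/M in ej0.
  have h1 : expR b <= expR (psi (M / c)) * expR (- psi v).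
    by rewrite -expRD ler_expR; rewrite /b; lra.
  have h2 : expR (psi (M / c)) <= \sum_(j < m) expR (psi (f j / c)).
    rewrite (bigD1 j0) //= ej0.
    apply: ler_wpDr; first by apply: sumr_ge0 => i _; apply: ltW; apply: expR_gt0.
    done.
  have := ler_wpM2r (ltW E0) h2.
  have : 0 < expR b by apply: expR_gt0.
  nra.
have ex1 : expR (2 / 6 * psi (k%:R^-1 * (y / c))) <= expR (b / (3 * k)%:R) by rewrite ler_expR.
have s6 : (expR b - 1) / (3 * k)%:R <= expR (- psi v) / (3 * k%:R) * \sum_(j < m) expR (psi (f j / c)).
  rewrite natrM mulrAC; apply: ler_wpM2r; first by rewrite invr_ge0 mulr_ge0 //; lra.
  done.
lra.
Qed.


Lemma mpsi d (T : measurableType d) (R : realType) (psi : R -> R)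
  (psi_nd : forall x y : R, 0 <= x -> x <= y -> psi x <= psi y)
  (h : T -> R) : measurable_fun setT h -> (forall x, 0 <= h x) ->
  measurable_fun setT (fun x => psi (h x)).
Proof.
move=> mh h0.
have -> : (fun x => psi (h x)) = (fun y => psi (Order.max y 0)) \o h.
  by apply/funext => x /=; rewrite (max_l (h0 x)).
apply: measurableT_comp => //; apply: nondecreasing_measurable => // a b ab.
apply: psi_nd; first by rewrite le_max lexx orbT.
by rewrite ge_max !le_max ab lexx !orbT.
Qed.

Lemma mexppsi d (T : measurableType d) (R : realType) (psi : R -> R)
  (psi_nd : forall x y : R, 0 <= x -> x <= y -> psi x <= psi y)
  (h : T -> R) (a : R) : measurable_fun setT h -> (forall x, 0 <= h x) ->
  measurable_fun setT (fun x => ((expR (a * psi (h x)) - 1)%:E)%E).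
Proof.
move=> mh h0; apply/measurable_EFinP => /=.
apply: measurable_funB => //.
apply: (measurableT_comp (f := expR) (g := fun x => a * psi (h x))).
  exact: measurable_expR.
apply: measurable_funM => //; exact: mpsi.
Qed.

Lemma mbigmax d (T : measurableType d) (R : realType) (I : Type)
  (F : I -> T -> R) (s : seq I) : (forall j, measurable_fun setT (F j)) ->
  measurable_fun setT (fun x => \big[Order.max/0]_(j <- s) F j x).
Proof.
move=> mF; elim: s => [|a s IH].
  have -> : (fun x => \big[Order.max/0]_(j <- [::]) F j x) = cst 0.
    by apply/funext => x; rewrite big_nil.
  exact: measurable_cst.
have -> : (fun x => \big[Order.max/0]_(j <- a :: s) F j x) =
    (F a) \max (fun x => \big[Order.max/0]_(j <- s) F j x).
  by apply/funext => x; rewrite big_cons.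
exact: measurable_maxr.
Qed.

Lemma orlicz_mem d (T : measurableType d) (R : realType) (P : probability T R)
  (psi : R -> R)
  (psi_ge0 : forall x : R, 0 <= x -> 0 <= psi x)
  (psi_nd : forall x y : R, 0 <= x -> x <= y -> psi x <= psi y)
  (X : T -> R) (mX : measurable_fun setT X) (c : R) : 0 < c ->
  (orlicz_norm P (PsiF psi) X < c%:E)%E ->
  (\int[P]_x (PsiF psi (`|X x| / c))%:E <= 1)%E.
Proof.
move=> c0 /ereal_inf_lt [_ [c1 [c10 hc1] <-]]; rewrite lte_fin => c1c.
apply: le_trans hc1.
have mabs : measurable_fun setT (fun x => `|X x|).
  by apply: measurableT_comp => //; exact: normr_measurable.
have mh : forall e, measurable_fun setT (fun x => `|X x| / e).
  move=> e; apply: measurable_funM => //; exact: measurable_cst.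
apply: ge0_le_integral => //.
- move=> x _; rewrite lee_fin /PsiF subr_ge0 -expR0 ler_expR.
  by apply: psi_ge0; apply: divr_ge0 => //; apply: ltW.
- by have := mexppsi psi_nd 1 (mh c) (fun x => divr_ge0 (normr_ge0 _) (ltW c0));
    under eq_fun do rewrite mul1r.
- by have := mexppsi psi_nd 1 (mh c1) (fun x => divr_ge0 (normr_ge0 _) (ltW c10));
    under eq_fun do rewrite mul1r.
- move=> x _; rewrite lee_fin /PsiF lerB // ler_expR; apply: psi_nd.
    by apply: divr_ge0 => //; apply: ltW.
  by apply: ler_pM => //; [apply: ltW; rewrite invr_gt0 | rewrite lef_pV2 ?posrE //; apply: ltW].
Qed.


Lemma main_bound (R : realType) (d : measure_display) (T : measurableType d)
  (P : probability T R) (psi : R -> R)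
  (psi0 : psi 0 = 0)
  (psi_ge0 : forall x : R, 0 <= x -> 0 <= psi x)
  (psi_nd : forall x y : R, 0 <= x -> x <= y -> psi x <= psi y)
  (psi_cvx : forall x y t : R, 0 <= x -> 0 <= y -> 0 <= t <= 1 ->
     psi (t * x + (1 - t) * y) <= t * psi x + (1 - t) * psi y)
  (m : nat) (m_gt0 : (0 < m)%N) (Z : 'I_m -> {RV P >-> R})
  (c v w : R) (k : nat) : 0 < c -> 0 <= v -> w = c * v -> (0 < k)%N ->
  (forall j, \int[P]_x (PsiF psi (`|Z j x| / c))%:E <= 1)%E ->
  expR (- psi v) / (3 * k%:R) * (m%:R * 2) <= 1 ->
  (\int[P]_x (PsiL psi (Num.sqrt 6)
     (`|Order.max ((\big[Order.max/0]_(j < m) `|Z j x|) - w) 0| / (Num.sqrt 6 * (k%:R * c))))%:E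
   <= 1)%E.
Proof.
move=> c0 v0 ew k0 HZ cond.
set C := expR (- psi v) / (3 * k%:R).
have C0 : 0 <= C.
  by apply: divr_ge0; [apply: ltW; apply: expR_gt0 | rewrite mulr_ge0 // ler0n].
have mZ : forall j, measurable_fun setT (fun x => `|Z j x|).
  move=> j; have := measurable_funPT (Z j) => mZj.
  by apply: measurableT_comp => //; exact: normr_measurable.
have mh : forall j, measurable_fun setT (fun x => `|Z j x| / c).
  move=> j; apply: measurable_funM => //; exact: measurable_cst.
have h0 : forall j x, 0 <= `|Z j x| / c.
  by move=> j x; apply: divr_ge0 => //; apply: ltW.
have mg : forall j, measurable_fun setT (fun x => (expR (psi (`|Z j x| / c)))%:E).
  move=> j; apply/measurable_EFinP => /=.
  apply: (measurableT_comp (f := expR) (g := fun x => psi (`|Z j x| / c))).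
    exact: measurable_expR.
  exact: mpsi.
have L0 : 0 < Num.sqrt 6 :> R by rewrite sqrtr_gt0; lra.
set X := fun x => Order.max ((\big[Order.max/0]_(j < m) `|Z j x|) - w) 0.
have X0 : forall x, 0 <= X x by move=> x; rewrite /X le_max lexx orbT.
have mX : measurable_fun setT X.
  apply: measurable_maxr; last exact: measurable_cst.
  apply: measurable_funB; last exact: measurable_cst.
  exact: (mbigmax (F := fun j x => `|Z j x|)).
have mXs : measurable_fun setT (fun x => `|X x| / (Num.sqrt 6 * (k%:R * c))).
  apply: measurable_funM; last exact: measurable_cst.
  by apply: measurableT_comp => //; exact: normr_measurable.
apply: (@le_trans _ _ (\int[P]_x (C * \sum_(j < m) expR (psi (`|Z j x| / c)))%:E)%E).
  apply: ge0_le_integral => //.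
  - move=> x _; rewrite lee_fin /PsiL subr_ge0 -expR0 ler_expR.
    apply: mulr_ge0; first by apply: divr_ge0 => //; rewrite exprn_ge0 // ltW.
    apply: psi_ge0; apply: mulr_ge0; first exact: ltW.
    apply: divr_ge0 => //; apply: mulr_ge0; first exact: ltW.
    by apply: mulr_ge0 => //; apply: ltW.
  - rewrite /PsiL.
    have := mexppsi psi_nd (2 / Num.sqrt 6 ^+ 2) (h := fun x => Num.sqrt 6 * (`|X x| / (Num.sqrt 6 * (k%:R * c)))) _ _.
    apply.
      apply: measurable_funM => //; exact: measurable_cst.
    move=> x; apply: mulr_ge0; first exact: ltW.
    apply: divr_ge0 => //; apply: mulr_ge0; first exact: ltW.
    by apply: mulr_ge0 => //; apply: ltW.
  - apply/measurable_EFinP => /=.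
    apply: measurable_funM; first exact: measurable_cst.
    apply: (@measurable_sum _ _ _ _ _ _ (fun j x => expR (psi (`|Z j x| / c)))) => j.
    by have /measurable_EFinP := mg j.
  - move=> x _; rewrite lee_fin.
    exact: (pointwise psi0 psi_ge0 psi_nd psi_cvx m_gt0 (f := fun j => `|Z j x|) (fun j => normr_ge0 _) c0 v0 ew k0).
under eq_integral do rewrite EFinM.
rewrite ge0_integralZl_EFin //; last first.
  - apply/measurable_EFinP => /=.
    apply: (@measurable_sum _ _ _ _ _ _ (fun j x => expR (psi (`|Z j x| / c)))) => j.
    by have /measurable_EFinP := mg j.
  - move=> x _; rewrite lee_fin; apply: sumr_ge0 => j _; apply: ltW; exact: expR_gt0.
under eq_integral do rewrite -sumEFin.
rewrite ge0_integral_sum //.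
have HE : forall j, (\int[P]_x (expR (psi (`|Z j x| / c)))%:E <= 2%:E)%E.
  move=> j.
  have -> : (\int[P]_x (expR (psi (`|Z j x| / c)))%:E =
     \int[P]_x ((PsiF psi (`|Z j x| / c))%:E + (cst 1%:E) x))%E.
    by apply: eq_integral => x _; rewrite /PsiF /= -EFinD subrK.
  rewrite ge0_integralD //.
  - rewrite integral_cst //.
    rewrite [W in (_ + _ * W <= _)%E](_ : _ = 1%E); last exact: probability_setT.
    rewrite mul1e.
    have -> : (2%:E = 1 + 1 :> \bar R)%E by rewrite -EFinD.
    by apply: leeD => //; exact: HZ.
  - move=> x _; rewrite lee_fin /PsiF subr_ge0 -expR0 ler_expR; exact: psi_ge0.
  - by have := mexppsi psi_nd 1 (mh j) (h0 j); under eq_fun do rewrite mul1r.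
apply: (@le_trans _ _ (C%:E * (\sum_(j < m) 2%:E))%E).
  apply: lee_wpmul2l; first by rewrite lee_fin.
  by apply: lee_sum => j _; exact: HE.
rewrite sumEFin sumr_const card_ord -EFinM lee_fin.
have -> : (2 *+ m : R) = m%:R * 2 by rewrite mulrC mulr_natr.
exact: cond.
Qed.


Lemma orlicz_le_of d (T : measurableType d) (R : realType) (P : probability T R)
  (Phi : R -> R) (X : T -> R) (c : R) : 0 < c ->
  (\int[P]_x (Phi (`|X x| / c))%:E <= 1)%E -> (orlicz_norm P Phi X <= c%:E)%E.
Proof. by move=> c0 h; apply: ereal_inf_lbound; exists c. Qed.


Unset Implicit Arguments. Set Strict Implicit.

Theorem lemma20 (R : realType) (d : measure_display) (T : measurableType d)
  (P : probability T R) (psi : R -> R)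
  (psi0 : psi 0 = 0)
  (psi_ge0 : forall x : R, 0 <= x -> 0 <= psi x)
  (psi_nd : forall x y : R, 0 <= x -> x <= y -> psi x <= psi y)
  (psi_cvx : forall x y t : R, 0 <= x -> 0 <= y -> 0 <= t <= 1 ->
     psi (t * x + (1 - t) * y) <= t * psi x + (1 - t) * psi y)
  (psi_nz : exists x : R, 0 <= x /\ psi x != 0)
  (m : nat) (m_gt0 : (0 < m)%N) (Z : 'I_m -> {RV P >-> R})
  (tau_fin : (\big[Order.max/0%E]_(j < m) orlicz_norm P (PsiF psi) (Z j) < +oo)%E) :
  let tau := (\big[Order.max/0%E]_(j < m) orlicz_norm P (PsiF psi) (Z j))%E in
  (orlicz_norm P (PsiL psi (Num.sqrt 6))
     (fun x => Order.max ((\big[Order.max/0]_(j < m) `|Z j x|)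
                          - fine tau * Psi_inv psi m%:R)%R 0%R)
   <= (Num.sqrt 6)%:E * tau)%E.
Proof.
cbv zeta.
set tau := (\big[Order.max/0%E]_(j < m) orlicz_norm P (PsiF psi) (Z j))%E.
have tau0 : (0 <= tau)%E by apply: Order.TotalTheory.bigmax_ge_id.
have hj : forall j, (orlicz_norm P (PsiF psi) (Z j) <= tau)%E.
  by move=> j; apply: Order.TotalTheory.le_bigmax.
have ftau : tau \is a fin_num by rewrite ge0_fin_numE.
set t := fine tau.
have et : tau = t%:E by rewrite /t fineK.
have t0 : 0 <= t by rewrite -lee_fin -et.
have [u0 hu] := psi_inv_spec psi0 psi_ge0 psi_nd psi_cvx psi_nz (ler0n R m).
set u := Psi_inv psi m%:R in u0 hu *.
have mZ : forall j, measurable_fun setT (Z j) by move=> j; exact: measurable_funPT.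
have L0 : 0 < Num.sqrt 6 :> R by rewrite sqrtr_gt0; lra.
have mp : 0 < m%:R :> R by rewrite ltr0n.
rewrite et -EFinM.
apply/lee_addgt0Pr => e e0.
rewrite -EFinD.
have [tz|tp] := eqVneq t 0.
  set c := e / (Num.sqrt 6 * m%:R).
  have c0 : 0 < c by apply: divr_gt0 => //; apply: mulr_gt0.
  have HZ : forall j, (\int[P]_x (PsiF psi (`|Z j x| / c))%:E <= 1)%E.
    move=> j; apply: orlicz_mem => //.
    by apply: (le_lt_trans (hj j)); rewrite et tz lte_fin.
  have cond : expR (- psi 0) / (3 * m%:R) * (m%:R * 2) <= 1.
    rewrite psi0 oppr0 expR0.
    have -> : 1 / (3 * m%:R) * (m%:R * 2) = 2 / 3 :> R by field; rewrite gt_eqF.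
    lra.
  have := main_bound psi0 psi_ge0 psi_nd psi_cvx m_gt0 (v := 0) (w := t * u) c0 (lexx 0)
     (_ : t * u = c * 0) m_gt0 HZ cond.
  have -> : Num.sqrt 6 * (m%:R * c) = e.
    by rewrite /c; field; rewrite ?gt_eqF //; apply/andP; split; rewrite gt_eqF.
  move=> /(_ ltac:(by rewrite tz mul0r mulr0)) h.
  apply: le_trans (orlicz_le_of e0 h) _.
  by rewrite lee_fin tz mulr0 add0r.
have tpos : 0 < t by rewrite lt_def tp t0.
set K := psi (2 * u) - psi u.
have K0 : 0 <= K by rewrite subr_ge0; apply: psi_nd => //; lra.
have l32 : 0 <= ln (3 / 2 : R) by rewrite ln_ge0 //; lra.
set dl := Order.min (e / Num.sqrt 6) (t * ln (3 / 2 : R) / (K + 1)).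
have dl0 : 0 < dl.
  rewrite /dl lt_min; apply/andP; split; first by apply: divr_gt0.
  apply: divr_gt0; last lra.
  by apply: mulr_gt0 => //; rewrite ln_gt0 //; lra.
have dle : dl <= e / Num.sqrt 6 by rewrite /dl ge_min lexx.
have dlt : dl <= t * ln (3 / 2 : R) / (K + 1) by rewrite /dl ge_min lexx orbT.
set c := t + dl.
have ec : c = t + dl by [].
have c0 : 0 < c by rewrite ec; lra.
set s := t / c.
have s0 : 0 <= s by apply: divr_ge0; lra.
have s1 : s <= 1 by rewrite /s ler_pdivrMr // mul1r ec; lra.
have e1s : 1 - s = dl / c by rewrite /s /c; field; rewrite gt_eqF.
set v := s * u.
have v0 : 0 <= v by apply: mulr_ge0.
have HZ : forall j, (\int[P]_x (PsiF psi (`|Z j x| / c))%:E <= 1)%E.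
  move=> j; apply: orlicz_mem => //.
  by apply: (le_lt_trans (hj j)); rewrite et lte_fin ec; lra.
have ch := psi_chord psi_cvx (s := s) (u := u) ltac:(by apply/andP; split) u0.
have dK : dl * K <= c * ln (3 / 2 : R).
  have : dl * (K + 1) <= t * ln (3 / 2 : R) by rewrite -ler_pdivlMr //; lra.
  have : 0 <= dl * ln (3 / 2 : R) by apply: mulr_ge0 => //; lra.
  rewrite /c; nra.
have sK : (1 - s) * K <= ln (3 / 2 : R).
  by rewrite e1s mulrAC ler_pdivrMr //; nra.
have pv : psi u - ln (3 / 2 : R) <= psi v.
  have : (1 - s) * psi (2 * u) = (1 - s) * K + (1 - s) * psi u by rewrite /K; ring.
  have : (1 - s) * K <= ln (3 / 2 : R) := sK.
  rewrite /v; nra.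
have cond : expR (- psi v) / (3 * 1%:R) * (m%:R * 2) <= 1.
  have h1 : expR (- psi v) <= 3 / 2 / (1 + m%:R).
    have : expR (- psi v) <= expR (ln (3 / 2 : R) - psi u) by rewrite ler_expR; lra.
    by rewrite expRD (expRN (psi u)) hu lnK // posrE; lra.
  have h2 : 0 <= m%:R * 2 / 3 :> R by apply: divr_ge0 => //; apply: mulr_ge0 => //; lra.
  have -> : expR (- psi v) / (3 * 1%:R) * (m%:R * 2) = expR (- psi v) * (m%:R * 2 / 3).
    by field.
  apply: (le_trans (ler_wpM2r h2 h1)).
  have -> : 3 / 2 / (1 + m%:R) * (m%:R * 2 / 3) = m%:R / (1 + m%:R) :> R.
    by field; rewrite gt_eqF //; lra.
  by rewrite ler_pdivrMr; lra.
have := main_bound psi0 psi_ge0 psi_nd psi_cvx m_gt0 (v := v) (w := t * u) c0 v0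
   (_ : t * u = c * v) (ltn0Sn 0) HZ cond.
move=> /(_ ltac:(by rewrite /v /s; field; rewrite gt_eqF)) h.
have c2 : 0 < Num.sqrt 6 * (1%:R * c) by rewrite mul1r; apply: mulr_gt0.
apply: le_trans (orlicz_le_of c2 h) _.
rewrite lee_fin mul1r /c mulrDr lerD2l.
by rewrite mulrC -ler_pdivlMr.
Qed.
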